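(* Let $a,b,c,e$ be positive integers with $e\leqslant c$. If there exists an $\mathrm{IHS}(a,be;c)$, then there exists an integer Heffter array $\mathrm{H}(ac,bc;be,ae)$.
   Context: An integer Heffter array set $\mathrm{IHS}(m,n;c)$ is a collection of $c$ completely filled $m\times n$ arrays with integer entries such that the absolute values of all $mnc$ entries (taken over all $c$ arrays) are exactly $1,2,\ldots,mnc$, each occurring exactly once, and in every array the entries of each row and of each column sum to $0$. An integer Heffter array $\mathrm{H}(m,n;s,k)$ is an $m\times n$ partially filled array whose entries are integers from $\{\pm1,\ldots,\pm nk\}$ such that each row contains exactly $s$ filled cells, each column contains exactly $k$ filled cells, no two entries have the same absolute value, and the entries of every row and every column sum to $0$. *)

(* Defs.v *)
From mathcomp Require Import all_boot all_order all_algebra.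
Set Implicit Arguments. Unset Strict Implicit. Unset Printing Implicit Defensive.
Import GRing.Theory Num.Theory.
Local Open Scope ring_scope.

Definition is_IHS (m n c : nat) (A : 'I_c -> 'M[int]_(m, n)) : Prop :=
  [/\ (forall t i j, (0 < `|A t i j|)%N /\ (`|A t i j| <= m * n * c)%N),
      (forall v : nat, (0 < v)%N -> (v <= m * n * c)%N ->
          exists t i j, `|A t i j|%N = v),
      (forall t i j t' i' j', `|A t i j|%N = `|A t' i' j'|%N ->
          (t, i, j) = (t', i', j')) &
      (forall t i, \sum_(j < n) A t i j = 0) /\
      (forall t j, \sum_(i < m) A t i j = 0)].

Definition IHS_exists (m n c : nat) : Prop :=
  exists A : 'I_c -> 'M[int]_(m, n), is_IHS A.

(* A partially filled m x n array: None = empty cell, Some x = cell filled with x.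
   Integer Heffter array H(m,n;s,k). *)
Definition is_heffter (m n s k : nat) (A : 'M[option int]_(m, n)) : Prop :=
  [/\ (forall i j x, A i j = Some x -> (0 < `|x|)%N /\ (`|x| <= n * k)%N),
      (forall i, #|[set j | A i j != None]| = s),
      (forall j, #|[set i | A i j != None]| = k),
      (forall i j i' j' x x', A i j = Some x -> A i' j' = Some x' ->
          `|x|%N = `|x'|%N -> (i, j) = (i', j')) &
      (forall i, \sum_(j < n) odflt 0 (A i j) = 0) /\
      (forall j, \sum_(i < m) odflt 0 (A i j) = 0)].

Definition heffter_exists (m n s k : nat) : Prop :=
  exists A : 'M[option int]_(m, n), is_heffter s k A.

(* Main.v *)
Require Import Defs.
From mathcomp Require Import all_boot all_order all_algebra zify.
Set Implicit Arguments. Unset Strict Implicit. Unset Printing Implicit Defensive.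
From mathcomp Require Import all_boot all_order all_algebra.

Lemma split_big (R : Type) (idx : R) (op : Monoid.com_law idx) n k (F : nat -> R) :
  \big[op/idx]_(0 <= x < n * k) F x =
  \big[op/idx]_(0 <= s < n) \big[op/idx]_(0 <= j < k) F (s * k + j).
Proof.
rewrite big_nat_mul; apply: eq_bigr => s _.
rewrite -{1}(add0n (s * k)) big_addn mulSn.
have -> : (k + s * k - s * k = k)%N by rewrite addnK.

by apply: eq_bigr => j _; rewrite addnC.
Qed.

Lemma perm_bij (R : Type) (idx : R) (op : Monoid.com_law idx) c (h : nat -> nat) (F : nat -> R) :
  (forall x, x < c -> h x < c) ->
  (forall x y, x < c -> y < c -> h x = h y -> x = y) ->
  \big[op/idx]_(0 <= x < c) F (h x) = \big[op/idx]_(0 <= x < c) F x.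
Proof.
move=> hc hinj.
rewrite -(big_map h predT F); apply: perm_big.
have U : uniq (map h (index_iota 0 c)).
  rewrite map_inj_in_uniq ?iota_uniq // => x y; rewrite !mem_index_iota.
  by move=> /andP[_ Hx] /andP[_ Hy]; apply: hinj.
apply: uniq_perm => //; first exact: iota_uniq.
have [] := uniq_min_size U (s2 := index_iota 0 c).
- by move=> y /mapP[x]; rewrite !mem_index_iota => /andP[_ /hc] ? ->.
- by rewrite size_map.
- by [].
Qed.

Lemma restrict_big (R : Type) (idx : R) (op : Monoid.com_law idx) c e (F : nat -> R) :
  e <= c ->
  \big[op/idx]_(0 <= k < c) (if k < e then F k else idx) = \big[op/idx]_(0 <= k < e) F k.
Proof.
move=> ec; rewrite (big_nat_widen _ _ _ _ _ ec) [RHS]big_mkcond.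
by [].
Qed.

Definition ordx n (H : (0 < n)%N) (x : nat) : 'I_n := insubd (Ordinal H) x.

Lemma ordxE n (H : (0 < n)%N) x : (x < n)%N -> val (ordx H x) = x.
Proof. by move=> xn; rewrite val_insubd xn. Qed.

Lemma ordx_val n (H : (0 < n)%N) (x : 'I_n) : ordx H x = x.
Proof. by apply: val_inj; rewrite ordxE. Qed.

Lemma divmodE a r i : (i < a)%N -> ((r * a + i) %/ a = r) /\ ((r * a + i) %% a = i).
Proof.
move=> ia; have a0 : (0 < a)%N by apply: leq_ltn_trans ia.
split; first by rewrite divnMDl // divn_small // addn0.
by rewrite modnMDl modn_small.
Qed.

Definition gfun a b c e (Hc : (0 < c)%N) (Ha : (0 < a)%N) (Hbe : (0 < b * e)%N)
  (A : 'I_c -> 'M[int]_(a, b * e)) (I J : nat) : option int :=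
  if (((J %/ b) + c - I %/ a) %% c < e)%N then
    Some (A (ordx Hc (I %/ a)) (ordx Ha (I %% a))
            (ordx Hbe ((((J %/ b) + c - I %/ a) %% c) * b + J %% b)))
  else None.

Lemma gE a b c e Hc Ha Hbe A r i s j : (i < a)%N -> (j < b)%N ->
  @gfun a b c e Hc Ha Hbe A (r * a + i) (s * b + j) =
  if ((s + c - r) %% c < e)%N then
    Some (A (ordx Hc r) (ordx Ha i) (ordx Hbe (((s + c - r) %% c) * b + j)))
  else None.
Proof.
move=> ia jb; rewrite /gfun; have [-> ->] := divmodE r ia; have [-> ->] := divmodE s jb.
by [].
Qed.
Lemma modrot c u : (u < 2 * c -> u %% c = if u < c then u else u - c)%N.
Proof.
move=> h; case: ifP => uc; first by rewrite modn_small.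
have -> : u = (u - c) + c by lia.
by rewrite modnDr modn_small; lia.
Qed.
Lemma rot_inj c r x y : (r < c -> x < c -> y < c -> (x + c - r) %% c = (y + c - r) %% c -> x = y)%N.
Proof. move=> h1 h2 h3; rewrite !modrot; try lia. do 2 case: ifP; lia. Qed.
Lemma refl_inj c s x y : (s < c -> x < c -> y < c -> (s + c - x) %% c = (s + c - y) %% c -> x = y)%N.
Proof. move=> h1 h2 h3; rewrite !modrot; try lia. do 2 case: ifP; lia. Qed.
Lemma kb_lt k b e j : (k < e -> j < b -> k * b + j < b * e)%N.
Proof.
move=> ke jb; apply: (@leq_trans (k * b + b)); first by rewrite ltn_add2l.
by rewrite -mulSnr mulnC leq_mul2l ke orbT.
Qed.

Theorem lemma4p1 (a b c e : nat) :
  (0 < a)%N -> (0 < b)%N -> (0 < c)%N -> (0 < e)%N -> (e <= c)%N ->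
  IHS_exists a (b * e) c ->
  heffter_exists (a * c) (b * c) (b * e) (a * e).
Proof.
move=> Ha Hb Hc He ec [A [Hbd _ Hinj [Hrow Hcol]]].
have Hbe : (0 < b * e)%N by rewrite muln_gt0 Hb He.
pose g := @gfun a b c e Hc Ha Hbe A.
exists ((\matrix_(I, J) g I J)%R : 'M[option int]_(a * c, b * c)).
have Idec : forall I : 'I_(a * c), (I %/ a < c)%N /\ (I %% a < a)%N /\ val I = I %/ a * a + I %% a.
  move=> I; split; first by rewrite ltn_divLR // [X in (_ < X)%N]mulnC.
  by split; [rewrite ltn_pmod | exact: divn_eq].
have Jdec : forall J : 'I_(b * c), (J %/ b < c)%N /\ (J %% b < b)%N /\ val J = J %/ b * b + J %% b.
  move=> J; split; first by rewrite ltn_divLR // [X in (_ < X)%N]mulnC.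
  by split; [rewrite ltn_pmod | exact: divn_eq].
split.
- move=> I J x; rewrite mxE /g /gfun; case: ifP => // _ [<-].
  have [h1 h2] := Hbd (ordx Hc (I %/ a)) (ordx Ha (I %% a)) (ordx Hbe (((J %/ b + c - I %/ a) %% c) * b + J %% b)).
  split => //; apply: (leq_trans h2).
  have -> : (b * c * (a * e) = a * (b * e) * c)%N by nia.
  by [].
- move=> I; rewrite -sum1_card big_mkcond /=.
  transitivity (\sum_(J < b * c) ((g I J != None) : nat))%N.
    by apply: eq_bigr => J _; rewrite inE mxE; case: (g I J).
  rewrite -(big_mkord xpredT (fun x => (g I x != None : nat))) mulnC split_big.
  have [rc [ia IE]] := Idec I; rewrite IE.
  transitivity (\sum_(0 <= s < c) (fun k => if (k < e)%N then b else 0%N) ((s + c - I %/ a) %% c))%N.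
    apply: eq_big_nat => s /andP[_ sc].
    under eq_big_nat => j /andP[_ jb] do rewrite /g gE //.
    case: ifP => _; first by rewrite sum_nat_const_nat subn0 muln1.
    by rewrite big1.
  transitivity (\sum_(0 <= k < c) (if (k < e)%N then b else 0%N))%N.
    apply: (@perm_bij _ _ _ c (fun s => (s + c - I %/ a) %% c)%N).
    + by move=> x _; rewrite ltn_pmod.
    + by move=> x y xc yc; apply: rot_inj.
  by rewrite restrict_big // sum_nat_const_nat subn0 mulnC.
- move=> J; rewrite -sum1_card big_mkcond /=.
  transitivity (\sum_(I < a * c) ((g I J != None) : nat))%N.
    by apply: eq_bigr => I _; rewrite inE mxE; case: (g I J).
  rewrite -(big_mkord xpredT (fun x => (g x J != None : nat))) mulnC split_big.
  have [sc [jb JE]] := Jdec J; rewrite JE.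
  transitivity (\sum_(0 <= r < c) (fun k => if (k < e)%N then a else 0%N) ((J %/ b + c - r) %% c))%N.
    apply: eq_big_nat => r /andP[_ rc].
    under eq_big_nat => i /andP[_ ia] do rewrite /g gE //.
    case: ifP => _; first by rewrite sum_nat_const_nat subn0 muln1.
    by rewrite big1.
  transitivity (\sum_(0 <= k < c) (if (k < e)%N then a else 0%N))%N.
    apply: (@perm_bij _ _ _ c (fun r => (J %/ b + c - r) %% c)%N).
    + by move=> x _; rewrite ltn_pmod.
    + by move=> x y xc yc; apply: refl_inj.
  by rewrite restrict_big // sum_nat_const_nat subn0 mulnC.
- move=> I J I' J' x x'; rewrite !mxE /g /gfun.
  have [rc [ia IE]] := Idec I; have [sc [jb JE]] := Jdec J.
  have [rc' [ia' IE']] := Idec I'; have [sc' [jb' JE']] := Jdec J'.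
  case: ifP => // k1 [<-]; case: ifP => // k2 [<-] /Hinj [].
  move=> /(congr1 val) e1 /(congr1 val) e2 /(congr1 val) e3.
  rewrite !ordxE ?kb_lt // in e1 e2 e3.
  have [d1 m1] := divmodE ((J %/ b + c - I %/ a) %% c) jb.
  have [d2 m2] := divmodE ((J' %/ b + c - I' %/ a) %% c) jb'.
  have ej : J %% b = J' %% b by rewrite -m1 -m2 e3.
  have ek : ((J %/ b + c - I %/ a) %% c) = ((J' %/ b + c - I' %/ a) %% c) by rewrite -d1 -d2 e3.
  rewrite -e1 in ek; have es := rot_inj rc sc sc' ek.
  congr pair; apply: val_inj => /=; first by rewrite IE IE' e1 e2.
  by rewrite JE JE' es ej.
- split.
  + move=> I; have [rc [ia IE]] := Idec I.
    transitivity (\sum_(J < b * c) odflt 0%R (g I J))%R.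
      by apply: eq_bigr => J _; rewrite mxE.
    rewrite -(big_mkord xpredT (fun x => odflt 0%R (g I x))) mulnC split_big IE.
    set r := (I %/ a)%N in rc IE *; set i := (I %% a)%N in ia IE *.
    pose F x := A (ordx Hc (r)) (ordx Ha (i)) (ordx Hbe x).
    pose G k := if (k < e)%N then (\sum_(0 <= j < b) F (k * b + j)%N)%R else 0%R.
    transitivity (\sum_(0 <= s < c) G ((s + c - r) %% c)%N)%R.
      apply: eq_big_nat => s /andP[_ sc].
      under eq_big_nat => j /andP[_ jb] do rewrite /g gE //.
      rewrite /G; case: ifP => _ //; by rewrite big1.
    transitivity (\sum_(0 <= k < c) G k)%R.
      apply: (@perm_bij _ _ _ c (fun s => (s + c - r) %% c)%N).
      * by move=> x _; rewrite ltn_pmod.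
      * by move=> x y xc yc; apply: rot_inj.
    rewrite restrict_big //.
    transitivity (\sum_(0 <= x < e * b) F x)%R; first by rewrite split_big.
    rewrite mulnC big_mkord -[RHS](Hrow (ordx Hc (r)) (ordx Ha (i))).
    by apply: eq_bigr => x _; rewrite /F ordx_val.
  + move=> J; have [sc [jb JE]] := Jdec J.
    transitivity (\sum_(I < a * c) odflt 0%R (g I J))%R.
      by apply: eq_bigr => I _; rewrite mxE.
    rewrite -(big_mkord xpredT (fun x => odflt 0%R (g x J))) mulnC split_big JE.
    set s0 := (J %/ b)%N in sc JE *; set j := (J %% b)%N in jb JE *.
    rewrite big_nat_cond big1 // => r /andP[/andP[_ rc] _].
    under eq_big_nat => i /andP[_ ia] do rewrite /g (gE Hc Ha Hbe A r s0 ia jb).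
    case kc : ((s0 + c - r) %% c < e)%N; last by rewrite big1.
    rewrite big_mkord -[RHS](Hcol (ordx Hc r) (ordx Hbe (((s0 + c - r) %% c) * b + j)%N)).
    by apply: eq_bigr => i _ /=; rewrite ordx_val.
Qed.
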